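(* For any non-hierarchical query $Q$, $\mathsf{w}(\widehat Q)\ge\frac32$, where $\widehat Q$ is the multivariate extension of $Q$.
   Context: A query is a full conjunctive query $Q = R_1(\mathbf X_1)\wedge\cdots\wedge R_k(\mathbf X_k)$. For a variable $X$, $\mathrm{at}(X)$ is the set of atoms containing $X$; $Q$ is hierarchical if for any two variables $X,Y$, either $\mathrm{at}(X)\subseteq\mathrm{at}(Y)$, $\mathrm{at}(Y)\subseteq\mathrm{at}(X)$, or $\mathrm{at}(X)\cap\mathrm{at}(Y)=\emptyset$. Multivariate extension: take fresh variables $Z_1,\dots,Z_k$. For a permutation $\sigma$ of $[k]$, the component $\widehat Q_\sigma$ replaces each atom $R_{\sigma_i}(\mathbf X_{\sigma_i})$ by $\widehat R_{\sigma_i}(Z_1,\dots,Z_i,\mathbf X_{\sigma_i})$; $\widehat Q$ is the union of all components. Fractional hypertree width $\mathsf{w}(P)$ of a query $P$: minimum over tree decompositions of $P$ (trees with bags of variables covering every atom schema, the bags containing any variable forming a connected subtree) of the maximum over bags $B$ of the fractional edge cover number of $P$ restricted to $B$ (each atom schema intersected with $B$). For a union of queries, $\mathsf{w}$ is the maximum over the queries. *)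

(* Defs.v *)
From HB Require Import structures.
From mathcomp Require Import all_boot all_order all_algebra all_fingroup.
From mathcomp Require Import classical_sets reals constructive_ereal ereal.
Set Implicit Arguments. Unset Strict Implicit. Unset Printing Implicit Defensive.
Import Order.TTheory GRing.Theory Num.Theory.
Local Open Scope ring_scope.

(* A (full conjunctive) query with k atoms over the finite variable type V is
   represented by its atom schemas  Q : 'I_k -> {set V}
   (atom i is R_i(X_i); Q i is the set of variables occurring in X_i). *)

Definition atoms_of (V : finType) (k : nat) (Q : 'I_k -> {set V}) (x : V)
  : {set 'I_k} := [set i | x \in Q i].

Definition hierarchical (V : finType) (k : nat) (Q : 'I_k -> {set V}) : Prop :=
  forall x y : V,
    atoms_of Q x \subset atoms_of Q y \/ atoms_of Q y \subset atoms_of Q x \/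
    atoms_of Q x :&: atoms_of Q y = finset.set0.

(* The fresh variables Z_1, ..., Z_k are inr j
   (j : 'I_k, Z_{j+1} = inr j).  The component for the permutation s has,
   at (0-based) position i, the atom  \hat R_{s i}(Z_1, ..., Z_{i+1}, X_{s i}). *)
Definition ext_component (V : finType) (k : nat) (Q : 'I_k -> {set V})
  (s : 'S_k) : 'I_k -> {set (V + 'I_k)%type} :=
  fun i => [set inr j | j : 'I_k & (j <= i)%N] :|: [set inl x | x in Q (s i)].

Definition is_tree (n : nat) (e : rel 'I_n) : Prop :=
  (0 < n)%N /\ (forall a b, e a b = e b a) /\ (forall a, ~~ e a a) /\
  (forall a b, connect e a b) /\
  #|[set p : 'I_n * 'I_n | e p.1 p.2 && (p.1 < p.2)%N]| = n.-1.

Definition tree_decomposition (V : finType) (k : nat) (Q : 'I_k -> {set V})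
  (n : nat) (e : rel 'I_n) (bag : 'I_n -> {set V}) : Prop :=
  is_tree e /\
  (forall i : 'I_k, exists t : 'I_n, Q i \subset bag t) /\
  (forall x : V, forall a b : 'I_n, x \in bag a -> x \in bag b ->
     connect [rel u v | e u v && (x \in bag u) && (x \in bag v)] a b).

Definition frac_edge_cover_number (R : realType) (V : finType) (k : nat)
  (Q : 'I_k -> {set V}) (B : {set V}) : \bar R :=
  ereal_inf [set (\sum_(i < k) w i)%:E | w in
    [set w : 'I_k -> R | (forall i, 0 <= w i) /\
       (forall x, x \in B -> 1 <= \sum_(i < k | x \in Q i :&: B) w i)]]%classic.

Definition fhw (R : realType) (V : finType) (k : nat) (Q : 'I_k -> {set V})
  : \bar R :=
  ereal_inf [set r | exists (n : nat) (e : rel 'I_n) (bag : 'I_n -> {set V}),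
     tree_decomposition Q e bag /\
     r = ereal_sup [set frac_edge_cover_number R Q (bag t) | t in [set: 'I_n]]]%classic.

(* Width of the multivariate extension (union of all components): the maximum
   of the widths of the components. *)
Definition fhw_ext (R : realType) (V : finType) (k : nat) (Q : 'I_k -> {set V})
  : \bar R :=
  ereal_sup [set fhw R (ext_component Q s) | s in [set: 'S_k]]%classic.

(* Main.v *)
Require Import Defs.
From mathcomp Require Import all_boot all_order all_algebra all_fingroup.
From mathcomp Require Import classical_sets reals constructive_ereal ereal.
From mathcomp Require Import zify lra.
From Stdlib Require Import Classical.
From mathcomp Require Import fintype finset.
Set Implicit Arguments. Unset Strict Implicit. Unset Printing Implicit Defensive.
Import Order.TTheory GRing.Theory Num.Theory.
Definition tedges n (e : rel 'I_n) : {set 'I_n * 'I_n} :=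
  [set p | e p.1 p.2 && (p.1 < p.2)%N].
Definition inside n (e : rel 'I_n) (S : {set 'I_n}) : {set 'I_n * 'I_n} :=
  [set p in tedges e | (p.1 \in S) && (p.2 \in S)].
Definition connW n (e : rel 'I_n) (W : {set 'I_n}) := forall a b, a \in W -> b \in W ->
  connect [rel u v | e u v && (u \in W) && (v \in W)] a b.

Lemma exit_edge (T : finType) (r : rel T) (S : {set T}) a b :
  connect r a b -> a \in S -> b \notin S -> exists u v, [/\ r u v, u \in S & v \notin S].
Proof.
move=> /connectP [p]; elim: p a => [|c p IH] a /=; first by move=> _ -> ->.
move=> /andP [rac pth] Hb aS; case: (boolP (c \in S)) => cS.
  exact: IH pth Hb cS.
by exists a, c.
Qed.

Lemma inside_sub n (e : rel 'I_n) (S T : {set 'I_n}) : S \subset T -> inside e S \subset inside e T.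
Proof.
move=> /subsetP ST; apply/subsetP => p; rewrite !inE => /andP [-> /andP [a b]].
by rewrite !ST.
Qed.

Lemma insideI n (e : rel 'I_n) (S T : {set 'I_n}) : inside e (S :&: T) = inside e S :&: inside e T.
Proof.
apply/setP => p; rewrite !inE.
by case: (e _ _ && _); case: (p.1 \in S); case: (p.1 \in T); case: (p.2 \in S); case: (p.2 \in T).
Qed.

Lemma insideU n (e : rel 'I_n) (S T : {set 'I_n}) : inside e S :|: inside e T \subset inside e (S :|: T).
Proof.
by rewrite subUset !inside_sub // ?subsetUl ?subsetUr.
Qed.

Lemma inside0 n (e : rel 'I_n) : inside e finset.set0 = finset.set0.
Proof. by apply/setP => p; rewrite !inE !andbF. Qed.

Lemma key n (e : rel 'I_n) (W : {set 'I_n}) :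
  (forall a b, e a b = e b a) -> connW e W ->
  forall d (S : {set 'I_n}), (#|W| - #|S| <= d)%N -> S \subset W -> S != finset.set0 ->
  (#|W| - #|S| <= #|inside e W :\: inside e S|)%N.
Proof.
move=> esym cW; elim=> [|d IH] S Hd SW S0; first by lia.
case: (boolP (W \subset S)) => WS.
  by have := subset_leq_card WS; lia.
case/subsetPn: WS => w wW wS.
case/set0Pn: S0 => s sS.
have sW : s \in W by apply: (subsetP SW).
have [u [v [/andP [/andP [euv uW] vW] uS vS]]] := exit_edge (cW s w sW wW) sS wS.
have Hc : #|v |: S| = #|S|.+1 by rewrite cardsU1 vS.
have SW' : v |: S \subset W by rewrite subUset sub1set vW SW.
have S0' : v |: S != finset.set0 by apply/set0Pn; exists v; rewrite !inE eqxx.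
have Hd' : (#|W| - #|v |: S| <= d)%N by rewrite Hc; lia.
have := IH (v |: S) Hd' SW' S0'.
have uv : u != v by apply/eqP => E; move: uS; rewrite E (negbTE vS).
pose pr := if (u < v)%N then (u, v) else (v, u).
have ev : e v u by rewrite esym.
have vS' := negbTE vS.
have vu : ~~ (u < v)%N -> (v < u)%N.
  move=> H; rewrite ltn_neqAle leqNgt H andbT; move: uv; apply: contraNN => /eqP E.
  by apply/eqP; apply: val_inj.
have prin : pr \in inside e W :\: inside e S.
  rewrite /pr; case: ifP => H; rewrite !inE /= ?uW ?vW ?uS ?vS' ?euv ?ev ?H //=.
  by rewrite vu ?H.
have prout : pr \in inside e (v |: S).
  rewrite /pr; case: ifP => H; rewrite !inE /= ?uS ?eqxx ?orbT ?euv ?ev ?H //=.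
  by rewrite vu ?H.
have sub : inside e W :\: inside e (v |: S) \subset (inside e W :\: inside e S) :\ pr.
  apply/subsetP => p; rewrite in_setD => /andP [H1 H2]; rewrite in_setD1 in_setD H2 andbT.
  apply/andP; split.
    by apply: contraNN H1 => /eqP ->.
  apply: contraNN H1; apply: (subsetP (inside_sub _ _)); exact: subsetUr.
have := subset_leq_card sub.
have := cardsD1 pr (inside e W :\: inside e S); rewrite prin /=.
rewrite Hc; move: #|W| #|S| #|inside e W :\: inside e S| #|inside e W :\: inside e S :\ pr| #|inside e W :\: inside e (v |: S)|.
clear; move=> a b c d1 f; lia.
Qed.

Lemma forest n (e : rel 'I_n) (S : {set 'I_n}) : is_tree e -> S != finset.set0 ->
  (#|inside e S| < #|S|)%N.
Proof.
move=> [n0 [esym [_ [conn cnt]]]] S0.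
have cW : connW e [set: 'I_n].
  move=> a b _ _; rewrite (@eq_connect _ _ e) //.
  by move=> u v /=; rewrite !inE !andbT.
have hT : inside e [set: 'I_n] = tedges e by apply/setP => p; rewrite !inE !andbT.
have := key esym cW (leqnn _) (subsetT S) S0.
rewrite cardsD (setIidPr (inside_sub e (subsetT S))) hT cardsT card_ord.
have : tedges e = [set p : 'I_n * 'I_n | e p.1 p.2 && (p.1 < p.2)%N] by [].
move=> ->; rewrite cnt.
have := subset_leq_card (inside_sub e (subsetT S)); rewrite hT.
have : tedges e = [set p : 'I_n * 'I_n | e p.1 p.2 && (p.1 < p.2)%N] by [].
move=> ->; rewrite cnt.
have : (0 < #|S|)%N by rewrite card_gt0.
have := max_card S; rewrite card_ord.
move: #|S| #|inside e S|; clear; move=> a b; lia.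
Qed.

Lemma connected_lb n (e : rel 'I_n) (A : {set 'I_n}) a :
  (forall a b, e a b = e b a) -> connW e A -> a \in A -> (#|A| - 1 <= #|inside e A|)%N.
Proof.
move=> esym cA aA.
have S0 : [set a] != finset.set0 by apply/set0Pn; exists a; rewrite inE.
have aS : [set a] \subset A by rewrite sub1set.
have := key esym cA (leqnn _) aS S0.
rewrite cards1 => h; apply: leq_trans h _.
by apply: subset_leq_card; apply: subsetDl.
Qed.

Lemma helly n (e : rel 'I_n) (A B C : {set 'I_n}) : is_tree e ->
  connW e A -> connW e B -> connW e C ->
  (exists t, (t \in A) && (t \in B)) -> (exists t, (t \in A) && (t \in C)) ->
  (exists t, (t \in B) && (t \in C)) -> exists t, [&& t \in A, t \in B & t \in C].
Proof.
move=> tr cA cB cC [ab /andP[abA abB]] [ac /andP[acA acC]] [bc /andP[bcB bcC]].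
have esym := tr.2.1.
case: (pickP (fun t => [&& t \in A, t \in B & t \in C])) => [t Ht|H]; first by exists t.
exfalso.
have ABC : A :&: B :&: C = finset.set0.
  by apply/setP => t; have := H t; rewrite !inE; case: (t \in A); case: (t \in B); case: (t \in C).
have lA := connected_lb esym cA abA.
have lB := connected_lb esym cB abB.
have lC := connected_lb esym cC acC.
have AB0 : A :&: B != finset.set0 by apply/set0Pn; exists ab; rewrite inE abA abB.
have AC0 : A :&: C != finset.set0 by apply/set0Pn; exists ac; rewrite inE acA acC.
have BC0 : B :&: C != finset.set0 by apply/set0Pn; exists bc; rewrite inE bcB bcC.
have U0 : A :|: B :|: C != finset.set0 by apply/set0Pn; exists ab; rewrite !inE abA.
have fAB := forest tr AB0.
have fAC := forest tr AC0.
have fBC := forest tr BC0.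
have fU := forest tr U0.
have cA0 : (0 < #|A|)%N by rewrite card_gt0; apply/set0Pn; exists ab.
have cB0 : (0 < #|B|)%N by rewrite card_gt0; apply/set0Pn; exists ab.
have cC0 : (0 < #|C|)%N by rewrite card_gt0; apply/set0Pn; exists ac.
have n1 := cardsUI A B.
have n2 := cardsUI (A :|: B) C.
rewrite setIUl in n2.
have n3 := cardsUI (A :&: C) (B :&: C).
have E3 : A :&: C :&: (B :&: C) = finset.set0.
  by apply/setP => t; have := H t; rewrite !inE; case: (t \in A); case: (t \in B); case: (t \in C).
rewrite E3 cards0 in n3.
have e1 := cardsUI (inside e A) (inside e B).
rewrite -insideI in e1.
have e2 := cardsUI (inside e A :|: inside e B) (inside e C).
rewrite setIUl -!insideI in e2.
have e3 := cardsUI (inside e (A :&: C)) (inside e (B :&: C)).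
rewrite -insideI E3 inside0 cards0 in e3.
have sU : inside e A :|: inside e B :|: inside e C \subset inside e (A :|: B :|: C).
  apply: subset_trans (insideU _ _ _); apply: setSU; exact: insideU.
have := subset_leq_card sU.
move: n1 n2 n3 e1 e2 e3 lA lB lC fAB fAC fBC fU cA0 cB0 cC0.
move: #|A| #|B| #|C| #|A :&: B| #|A :&: C| #|B :&: C| #|A :|: B| #|A :|: B :|: C|
  #|(A :&: C) :|: (B :&: C)|.
move: #|inside e A| #|inside e B| #|inside e C| #|inside e (A :&: B)| #|inside e (A :&: C)|
  #|inside e (B :&: C)| #|inside e A :|: inside e B| #|inside e A :|: inside e B :|: inside e C|
  #|inside e (A :&: C) :|: inside e (B :&: C)| #|inside e (A :|: B :|: C)|.
clear; intros; lia.
Qed.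

Lemma perm_front k (X : {set 'I_k}) (d : 'I_k) :
  exists (s : 'S_k) (m : nat), forall p : 'I_k, (s p \in X) = (p < m)%N.
Proof.
pose a := (fun x : 'I_k => x \in X).
pose t := [seq x <- enum 'I_k | a x] ++ [seq x <- enum 'I_k | predC a x].
have ht : perm_eq t (enum 'I_k) by rewrite /t (perm_filterC a) perm_refl.
have st : size t = k by rewrite (perm_size ht) size_enum_ord.
have ut : uniq t by rewrite (perm_uniq ht) enum_uniq.
pose f := fun p : 'I_k => nth d t p.
have finj : injective f.
  move=> p q /eqP; rewrite /f nth_uniq ?st // => /eqP; exact: val_inj.
exists (perm finj), (size [seq x <- enum 'I_k | a x]) => p.
rewrite permE /f /t nth_cat; case: ifP => H.
  by have := mem_nth d H; rewrite mem_filter => /andP [].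
have H2 : (p - size [seq x <- enum 'I_k | a x] < size [seq x <- enum 'I_k | predC a x])%N.
  move: st; rewrite /t size_cat; have := ltn_ord p; move: H.
  move: (size _) (size _); clear; intros; lia.
have := mem_nth d H2; rewrite mem_filter /= => /andP [nX _].
by apply/negbTE.
Qed.

Lemma mem_ext_inr (V : finType) k (Q : 'I_k -> {set V}) (s : 'S_k) p j :
  (inr j \in ext_component Q s p) = (j <= p)%N.
Proof.
rewrite /ext_component in_setU; apply/idP/idP.
  case/orP => /imsetP [j' Hj' E] //.
  by case: E => ->; rewrite inE in Hj'.
by move=> H; apply/orP; left; apply/imsetP; exists j; rewrite ?inE.
Qed.

Lemma mem_ext_inl (V : finType) k (Q : 'I_k -> {set V}) (s : 'S_k) p v :
  (inl v \in ext_component Q s p) = (v \in Q (s p)).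
Proof.
rewrite /ext_component in_setU; apply/idP/idP.
  case/orP => /imsetP [j' Hj' E] //.
  by case: E => ->.
by move=> H; apply/orP; right; apply/imsetP; exists v.
Qed.

Lemma connW_bag (T : finType) n (e : rel 'I_n) (bag : 'I_n -> {set T}) (z : T) :
  (forall x a b, x \in bag a -> x \in bag b ->
     connect [rel u v | e u v && (x \in bag u) && (x \in bag v)] a b) ->
  connW e [set t | z \in bag t].
Proof.
move=> cn a b; rewrite !inE => Ha Hb.
have E : [rel u v | e u v && (u \in [set t | z \in bag t]) && (v \in [set t | z \in bag t])]
  =2 [rel u v | e u v && (z \in bag u) && (z \in bag v)] by move=> u v /=; rewrite !inE.
rewrite (eq_connect E); exact: cn.
Qed.

Theorem mainTheorem8 (R : realType) (V : finType) (k : nat) (Q : 'I_k -> {set V}) :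
  ~ hierarchical Q -> ((3%:R / 2%:R : R)%:E <= fhw_ext R Q)%E.
Proof.
move=> nH.
have [x [y Hxy]] : exists x y, ~ (atoms_of Q x \subset atoms_of Q y \/
    atoms_of Q y \subset atoms_of Q x \/ atoms_of Q x :&: atoms_of Q y = finset.set0).
  apply: NNPP => H; apply: nH => x y; apply: NNPP => H'; apply: H; by exists x, y.
have /subsetPn [i ix iy] : ~~ (atoms_of Q x \subset atoms_of Q y).
  by apply/negP => h; apply: Hxy; left.
have /subsetPn [j jy jx] : ~~ (atoms_of Q y \subset atoms_of Q x).
  by apply/negP => h; apply: Hxy; right; left.
have /set0Pn [l] : atoms_of Q x :&: atoms_of Q y != finset.set0.
  by apply/eqP => h; apply: Hxy; right; right.
rewrite !inE => /andP [lx ly].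
rewrite !inE in ix iy jy jx.
pose X := atoms_of Q x :&: atoms_of Q y.
have [s [m Hs]] := perm_front X i.
have HX : forall p, (x \in Q (s p)) && (y \in Q (s p)) = (p < m)%N.
  by move=> p; rewrite -Hs !inE.
pose pi := (s^-1)%g i. pose pj := (s^-1)%g j.
have mpi : (m <= pi)%N.
  by have := HX pi; rewrite /pi permKV (negbTE iy) andbF => /esym/negbT; rewrite -leqNgt.
have mpj : (m <= pj)%N.
  by have := HX pj; rewrite /pj permKV (negbTE jx) /= => /esym/negbT; rewrite -leqNgt.
have mk : (m < k)%N by apply: leq_trans (ltn_ord pi).
pose zm : 'I_k := Ordinal mk.
pose CQ := ext_component Q s.
rewrite /fhw_ext; apply: le_ereal_sup_tmp.
exists (fhw R CQ); first by exists s.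
rewrite /fhw; apply/ereal_infP => _ [n [e [bag [TD ->]]]].
have [tr [cov cn]] := TD.
have [t0 /and3P [t0x t0y t0z]] : exists t, [&& t \in [set t | inl x \in bag t],
    t \in [set t | inl y \in bag t] & t \in [set t | inr zm \in bag t]].
  apply: (helly tr (connW_bag cn) (connW_bag cn) (connW_bag cn)).
  - have [t Ht] := cov ((s^-1)%g l); exists t; rewrite !inE.
    by rewrite !(subsetP Ht) // mem_ext_inl permKV.
  - have [t Ht] := cov pi; exists t; rewrite !inE.
    by rewrite !(subsetP Ht) // ?mem_ext_inl ?mem_ext_inr /pi ?permKV.
  - have [t Ht] := cov pj; exists t; rewrite !inE.
    by rewrite !(subsetP Ht) // ?mem_ext_inl ?mem_ext_inr /pj ?permKV.
rewrite !inE in t0x t0y t0z.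
apply: le_ereal_sup_tmp.
exists (frac_edge_cover_number R CQ (bag t0)); first by exists t0.
rewrite /frac_edge_cover_number; apply/ereal_infP => _ [w [w0 wc] <-].
rewrite lee_fin.
have cx := wc _ t0x. have cy := wc _ t0y. have cz := wc _ t0z.
rewrite big_mkcond /= in cx. rewrite big_mkcond /= in cy. rewrite big_mkcond /= in cz.
have H2 : (\sum_(i0 < k) ((if inl x \in CQ i0 :&: bag t0 then w i0 else 0%R) +
     (if inl y \in CQ i0 :&: bag t0 then w i0 else 0%R) +
     (if inr zm \in CQ i0 :&: bag t0 then w i0 else 0%R)) <= \sum_(i0 < k) (2%:R * w i0))%R.
  apply: ler_sum => p _.
  rewrite !in_setI t0x t0y t0z !andbT /CQ mem_ext_inl mem_ext_inl mem_ext_inr /=.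
  have := HX p; have := w0 p.
  case: (x \in Q (s p)); case: (y \in Q (s p)); case: (ltnP p m) => //= wp; intros; lra.
rewrite !big_split /= -mulr_sumr in H2.
lra.
Qed.
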